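(* With $\hat Q=\eta_0\mathcal X+\hat d$, $\mathcal X$, $\mathcal P=\gamma_0$ and the tilded oscillators as in the context, the state space (restricted to $b_0=0$) decomposes as (tilded-oscillator Fock space without zero modes) $\otimes$ ($\mathcal X,\mathcal P$ module) $\otimes$ ($\zeta_0,\eta_0$ module). Consider the two sectors built on $|\mathcal X=0\rangle$ (states $\sum_n|\psi_n\rangle\otimes\mathcal P^n|\mathcal X=0\rangle$) and on $|\mathcal P=0\rangle$ (states $\sum_n|\psi_n\rangle\otimes\mathcal X^n|\mathcal P=0\rangle$), with $|\psi_n\rangle$ arbitrary in the remaining factors. Then every class in the cohomology of $\hat Q$ in the first sector is represented by a state $|\psi\rangle\otimes|\mathcal X=0\rangle\otimes|\downarrow\rangle_{\zeta\eta}$, and every class in the second sector by a state $|\psi\rangle\otimes|\mathcal P=0\rangle\otimes|\uparrow\rangle_{\zeta\eta}$, where $|\psi\rangle$ is $\hat d$-closed in the Fock space of the tilded oscillators without zero modes; moreover two such representatives are $\hat Q$-cohomologous if and only if their $|\psi\rangle$'s differ by a $\hat d$-exact state. Hence in each sector the cohomology of $\hat Q$ is isomorphic to the cohomology of $\hat d$ on the Fock space of the tilded oscillators without zero modes.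
   Context: Modes: $x_n,\varphi_n$ with $[x_m,x_n]=[\varphi_m,\varphi_n]=m\delta_{m+n,0}$; fermionic $b_n,c_n$, $\{b_m,c_n\}=\delta_{m+n,0}$; fermionic $\zeta_n,\eta_n$, $\{\zeta_m,\eta_n\}=\delta_{m+n,0}$; bosonic $\beta_n,\gamma_n$, $[\gamma_m,\beta_n]=\delta_{m+n,0}$. $\hat Q$ is the relative BRST operator (the part of the light-cone BRST operator $Q_B$ without $b_0,c_0$), decomposed as $\hat Q=\eta_0\mathcal X+\hat d$ with $\mathcal X=\beta_0+\sum_{n\ne0}n\,c_n\zeta_{-n}$ and $\hat d$ independent of $\zeta_0,\eta_0$; $\mathcal P=\gamma_0$ so $[\mathcal X,\mathcal P]=1$. Tilded oscillators: $\tilde b_n=b_n+n\zeta_n\gamma_0$, $\tilde\eta_n=\eta_n+nc_n\gamma_0$ ($n\ne0$); these, with $c_n,\zeta_n,\beta_n,\gamma_n$ ($n\ne0$), commute with $\mathcal X,\mathcal P$, and $\hat d$ commutes with $\mathcal X$ and $\mathcal P$. $|\mathcal X=0\rangle$ is annihilated by $\mathcal X$, $|\mathcal P=0\rangle$ by $\mathcal P$. The $\zeta_0,\eta_0$ states: $\zeta_0|\downarrow\rangle_{\zeta\eta}=0$, $\eta_0|\uparrow\rangle_{\zeta\eta}=0$, $|\uparrow\rangle=\eta_0|\downarrow\rangle$. *)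

(* Defs.v *)
From HB Require Import structures.
From mathcomp Require Import all_boot all_order all_algebra.
Set Implicit Arguments. Unset Strict Implicit. Unset Printing Implicit Defensive.
Import Order.TTheory GRing.Theory Num.Theory.
Local Open Scope ring_scope.

(* V : the Fock space of the tilded oscillators without zero modes (an
   arbitrary K-vector space), d : V -> V the operator \hat d restricted to it.

   A state of a sector is a pair (a, b) of sequences nat -> V:
     a n  = component along  (P^n|X=0>  resp.  X^n|P=0>) (x) |down>
     b n  = component along  (P^n|X=0>  resp.  X^n|P=0>) (x) |up>
   States are finite sums: both sequences have finite support. *)

Definition finsupp (V : zmodType) (f : nat -> V) : Prop :=
  exists N : nat, forall n : nat, (N <= n)%N -> f n = 0.

Definition state (V : zmodType) : Type := ((nat -> V) * (nat -> V))%type.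

Definition fin_state (V : zmodType) (s : state V) : Prop :=
  finsupp s.1 /\ finsupp s.2.

Definition state0 (V : zmodType) : state V := (fun _ => 0, fun _ => 0).

Definition state_sub (V : zmodType) (s t : state V) : state V :=
  (fun n => s.1 n - t.1 n, fun n => s.2 n - t.2 n).

(* Action of X on the X,P-module of sector 1: basis P^n|X=0>,
   X P^n |X=0> = n P^(n-1) |X=0>  (since [X,P]=1, X|X=0>=0). *)
Definition X_sector1 (K : nzRingType) (V : lmodType K) (f : nat -> V) : nat -> V :=
  fun n => (n.+1)%:R *: f n.+1.

(* Action of X on the X,P-module of sector 2: basis X^n|P=0>,
   X X^n |P=0> = X^(n+1) |P=0>. *)
Definition X_sector2 (V : zmodType) (f : nat -> V) : nat -> V :=
  fun n => if n is m.+1 then f m else 0.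

(* Qhat = eta_0 X + dhat on (zeta_0,eta_0 module) (x) (X,P module) (x) V,
   with eta_0|down> = |up>, eta_0|up> = 0, and dhat (fermionic, commuting
   with X and P, anticommuting with eta_0) acting as d on V with the Koszul
   sign (+1 on |down>, -1 on |up>):
     Qhat(|down>(x)a + |up>(x)b) = |down>(x) d a + |up>(x)(X a - d b). *)
Definition Qhat (V : zmodType) (Xop : (nat -> V) -> nat -> V) (d : V -> V)
  (s : state V) : state V :=
  (fun n => d (s.1 n), fun n => Xop s.1 n - d (s.2 n)).

(* the state |psi> (x) |vacuum of X,P module> (x) |down>, resp. |up> *)
Definition delta0 (V : zmodType) (psi : V) : nat -> V :=
  fun n => if n is 0 then psi else 0.
Definition emb_down (V : zmodType) (psi : V) : state V := (delta0 psi, fun _ => 0).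
Definition emb_up (V : zmodType) (psi : V) : state V := (fun _ => 0, delta0 psi).

(* The content of the theorem for one sector: the representatives emb psi,
   psi d-closed, are Qhat-closed; every Qhat-closed state is Qhat-cohomologous
   to such a representative; two representatives are Qhat-cohomologous iff
   the psi's differ by a d-exact vector.  (This is exactly the statement that
   psi |-> emb psi induces an isomorphism H(d, V) ~= H(Qhat, sector).) *)
Definition sector_cohomology_iso (V : zmodType) (Xop : (nat -> V) -> nat -> V)
  (d : V -> V) (emb : V -> state V) : Prop :=
  (forall psi : V, d psi = 0 -> Qhat Xop d (emb psi) = state0 V) /\
  (forall s : state V, fin_state s -> Qhat Xop d s = state0 V ->
     exists psi : V, d psi = 0 /\
       exists w : state V, fin_state w /\ state_sub s (emb psi) = Qhat Xop d w) /\
  (forall psi psi' : V, d psi = 0 -> d psi' = 0 ->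
     ((exists w : state V, fin_state w /\
         state_sub (emb psi) (emb psi') = Qhat Xop d w)
      <-> exists chi : V, psi - psi' = d chi)).

(* Main.v *)
Require Import Defs.
From HB Require Import structures.
From mathcomp Require Import all_boot all_order all_algebra.
From Stdlib Require Import FunctionalExtensionality.
Import Order.TTheory GRing.Theory Num.Theory.
Local Open Scope ring_scope.

Lemma pair_ext (V : zmodType) (f g f' g' : nat -> V) :
  (forall n, f n = f' n) -> (forall n, g n = g' n) -> (f, g) = (f', g').
Proof.
move=> H1 H2; rewrite (functional_extensionality _ _ H1).
by rewrite (functional_extensionality _ _ H2).
Qed.

Lemma pair_app (V : zmodType) (f g f' g' : nat -> V) :
  (f, g) = (f', g') -> (forall n, f n = f' n) /\ (forall n, g n = g' n).
Proof. by case=> -> ->. Qed.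

Lemma finsupp_shift (V : zmodType) (f : nat -> V) :
  finsupp f -> finsupp (fun n => f n.+1).
Proof. by case=> N HN; exists N => n Hn; apply: HN; apply: leqW. Qed.

Lemma finsupp0 (V : zmodType) : finsupp (fun _ : nat => (0 : V)).
Proof. by exists 0%N. Qed.

Lemma finsupp_delta (V : zmodType) (v : V) : finsupp (delta0 v).
Proof. by exists 1%N; case. Qed.

Theorem theorem2 (K : numClosedFieldType) (V : lmodType K)
  (d : {linear V -> V}) (hd2 : forall v : V, d (d v) = 0) :
  sector_cohomology_iso (@X_sector1 K V) d (@emb_down V) /\
  sector_cohomology_iso (@X_sector2 V) d (@emb_up V).
Proof.
have dd : forall (v : V) n, d (delta0 v n) = delta0 (d v) n by move=> v [|n] /=; rewrite ?linear0.
split.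
- split; [|split].
  + move=> psi Hpsi; apply: pair_ext => n /=; first by rewrite dd; case: n.
    by rewrite /X_sector1 /= scaler0 linear0 subr0.
  + move=> [a b] [Fa Fb] /= /pair_app [H1 H2].
    exists (a 0%N); split; first exact: H1.
    exists ((fun n => if n is m.+1 then (m.+1%:R)^-1 *: b m else 0), fun _ => 0).
    split.
      split => /=; last exact: finsupp0.
      case: Fb => N /= HN; exists N.+1 => [[|n]] //= Hn.
      by rewrite HN ?scaler0.
    apply: pair_ext => n /=.
      case: n => [|n] /=; first by rewrite subrr linear0.
      rewrite subr0 linearZ /=.
      have := H2 n; rewrite /X_sector1 /= => /eqP; rewrite subr_eq0 => /eqP <-.
      rewrite scalerA mulVf ?scale1r //.
      by rewrite pnatr_eq0.
    rewrite /X_sector1 /= linear0 scalerA mulfV ?scale1r; last by rewrite pnatr_eq0.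
    set z := (X in b n - X). have -> : z = 0 by rewrite /z linear0.
    by rewrite ?addr0 ?subr0 ?oppr0 ?addr0.
  + move=> psi psi' Hp Hp'; split.
      move=> [[w1 w2] [_ /pair_app [E1 _]]].
      exists (w1 0%N); have := E1 0%N; rewrite /= => <-; done.
    move=> [chi Hchi].
    exists (delta0 chi, fun _ => 0); split.
      split; [exact: finsupp_delta | exact: finsupp0].
    apply: pair_ext => n /=.
      by rewrite dd; case: n => //=; rewrite ?subrr.
    rewrite /X_sector1 /= scaler0 (linear0 d); apply/eqP; rewrite ?oppr0 ?addr0 ?subr0 ?subrr //=.
- split; [|split].
  + move=> psi Hpsi; apply: pair_ext => n /=; first by rewrite linear0.
    by rewrite /X_sector2 dd; case: n => [|n] /=; rewrite ?Hpsi ?subrr ?linear0 ?subr0.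
  + move=> [a b] [Fa Fb] /= /pair_app [H1 H2].
    exists (b 0%N); split.
      by have := H2 0%N; rewrite /X_sector2 /= sub0r => /eqP; rewrite oppr_eq0 => /eqP.
    exists ((fun n => b n.+1), fun _ => 0).
    split; first by split; [exact: finsupp_shift | exact: finsupp0].
    apply: pair_ext => n /=.
      have := H2 n.+1; rewrite /X_sector2 /= => /eqP; rewrite subr_eq0 => /eqP ->.
      by rewrite subr0.
    rewrite /X_sector2 (linear0 d); case: n => [|n] /= //.
    exact: (etrans (subrr _) (esym (subrr _))).
  + move=> psi psi' Hp Hp'; split.
      move=> [[w1 w2] [_ /pair_app [_ E2]]].
      exists (- w2 0%N); have := E2 0%N; rewrite /X_sector2 /= sub0r => E.
      rewrite linearN; exact: E.
    move=> [chi Hchi].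
    exists (fun _ => 0, delta0 (- chi)); split.
      split; [exact: finsupp0 | exact: finsupp_delta].
    apply: pair_ext => n /=. rewrite (linear0 d). exact: subrr.
    rewrite /X_sector2 dd; case: n => [|n] /= //.
    rewrite linearN; apply: etrans Hchi _; apply: esym; exact: (etrans (sub0r _) (opprK _)).
Qed.
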